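(* Let $V$ be an $\mathcal{L}[\frac12]$-module on which $c$ acts as $0$, with a basis $\{x_k\mid k\in\frac12\mathbb{Z}\}$ and constants $a,b\in\mathbb{C}$, $f_{p,k},g_{n,k}\in\mathbb{C}$ such that for all $p\in\frac12+\mathbb{Z}$, $n\in\mathbb{Z}$, $k\in\frac12\mathbb{Z}$: $Y_px_k=f_{p,k}x_{k+p}$, $M_nx_k=g_{n,k}x_{k+n}$, $L_nx_k=(a+k+bn)x_{k+n}$ if $k\in\mathbb{Z}$ and $L_nx_k=(a+k+(b+\frac12)n)x_{k+n}$ if $k\in\frac12+\mathbb{Z}$. Then there exists $d_0\in\mathbb{C}$ such that $f_{p,k}=d_0$ for all $p,k\in\frac12+\mathbb{Z}$.
   Context: $\mathcal{L}[\frac12]$ is the complex Lie algebra with basis $\{L_m,Y_p,M_n,c\mid m,n\in\mathbb{Z},\ p\in\frac12+\mathbb{Z}\}$ and brackets $[L_m,L_{m'}]=(m'-m)L_{m+m'}+\delta_{m,-m'}\frac{m^3-m}{12}c$, $[L_m,Y_p]=(p-\frac m2)Y_{p+m}$, $[L_m,M_n]=nM_{n+m}$, $[Y_p,Y_{p'}]=(p'-p)M_{p+p'}$, $[Y_p,M_n]=[M_n,M_{n'}]=0$, $c$ central. *)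

(* Defs.v *)
From HB Require Import structures.
From mathcomp Require Import all_boot all_order all_algebra.
Set Implicit Arguments. Unset Strict Implicit. Unset Printing Implicit Defensive.
Import Order.TTheory GRing.Theory Num.Theory.
Local Open Scope ring_scope.

(* Conventions: a half-integer k in (1/2)Z is encoded by the integer K = 2k.
   Thus x_k is indexed by K : int; p in 1/2 + Z is encoded by an odd P = 2p;
   n in Z is encoded by itself.  f P K = f_{P/2, K/2}, g n K = g_{n, K/2}. *)

Definition oddZ (z : int) : bool := odd `|z|%N.

Definition half (C : numClosedFieldType) (z : int) : C := z%:~R / 2%:R.

(* coefficient of L_m x_k (k = K/2): L_m x_k = Lcoef a b m K * x_{k+m} *)
Definition Lcoef (C : numClosedFieldType) (a b : C) (m K : int) : C :=
  if oddZ K then a + half C K + (b + 1 / 2%:R) * m%:~R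
  else a + half C K + b * m%:~R.

(* The defining relations of L[1/2] evaluated on each basis vector x_k,
   with c acting as 0.  Since every generator maps x_k to a multiple of a
   single basis vector, and the x_k are linearly independent, the module
   axiom  u.(v.x) - v.(u.x) = [u,v].x  on basis vectors is exactly the
   following identity of coefficients. (Brackets [v,u] are the negatives
   of [u,v] and give the same identities.) *)
Definition L_half_module (C : numClosedFieldType) (a b : C)
    (f : int -> int -> C) (g : int -> int -> C) : Prop :=
  (* [L_m, L_m'] = (m'-m) L_{m+m'} + delta_{m,-m'} (m^3-m)/12 c, c = 0 *)
  (forall m m' K : int,
     Lcoef a b m (K + 2 * m') * Lcoef a b m' K
     - Lcoef a b m' (K + 2 * m) * Lcoef a b m K
     = (m' - m)%:~R * Lcoef a b (m + m') K) /\
  (* [L_m, Y_p] = (p - m/2) Y_{p+m} *)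
  (forall (m P K : int), oddZ P ->
     Lcoef a b m (K + P) * f P K - f P (K + 2 * m) * Lcoef a b m K
     = (half C P - half C m) * f (P + 2 * m) K) /\
  (* [L_m, M_n] = n M_{n+m} *)
  (forall m n K : int,
     Lcoef a b m (K + 2 * n) * g n K - g n (K + 2 * m) * Lcoef a b m K
     = n%:~R * g (n + m) K) /\
  (* [Y_p, Y_p'] = (p' - p) M_{p+p'} *)
  (forall P P' K : int, oddZ P -> oddZ P' ->
     f P (K + P') * f P' K - f P' (K + P) * f P K
     = (half C P' - half C P) * g ((P + P') %/ 2)%Z K) /\
  (* [Y_p, M_n] = 0 *)
  (forall P n K : int, oddZ P ->
     f P (K + 2 * n) * g n K - g n (K + P) * f P K = 0) /\
  (* [M_n, M_n'] = 0 *)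
  (forall n n' K : int,
     g n (K + 2 * n') * g n' K - g n' (K + 2 * n) * g n K = 0).

(* Main.v *)
Require Import Defs.
From HB Require Import structures.
From mathcomp Require Import all_boot all_order all_algebra zify ring.
Import Order.TTheory GRing.Theory Num.Theory.
Local Open Scope ring_scope.

Lemma oddZ_odd (K P : int) : oddZ K -> oddZ P -> oddZ (K + P) = false.
Proof. rewrite /oddZ => h1 h2; apply/negbTE; lia. Qed.
Lemma oddZ_shift (K m : int) : oddZ K -> oddZ (K + 2 * m).
Proof. rewrite /oddZ => h1; lia. Qed.

Lemma key (C : numClosedFieldType) (a b : C) (f g : int -> int -> C) :
  L_half_module a b f g ->
  forall (P K j m Kb K' P' : int), oddZ P -> oddZ K -> Kb = K + 2 * j ->
  K' = K + 2 * j + 2 * m -> P' = P + 2 * m ->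
  (a + Defs.half C K + j%:~R + (b + 1 / 2) * m%:~R) * (f P K' - f P Kb)
  = (m%:~R / 2 - P%:~R / 2) * (f P' Kb - f P Kb).
Proof.
case=> _ [H2 _] P K j m Kb K' P' oP oK -> -> ->.
have oKb : oddZ (K + 2 * j) by exact: oddZ_shift.
have := H2 m P (K + 2 * j) oP.
rewrite /Lcoef oddZ_odd // oddZ_shift // /Defs.half.
move/eqP; rewrite -subr_eq0 => /eqP E.
rewrite /Defs.half.
apply/eqP; rewrite -subr_eq0; apply/eqP.
rewrite -[RHS]oppr0 -[in RHS]E.
rewrite !intrD !intrM.
by field.
Qed.

Lemma col1 (C : numClosedFieldType) (a b : C) (f g : int -> int -> C) :
  L_half_module a b f g -> forall K : int, oddZ K -> f 1 (K + 2) = f 1 K.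
Proof.
move=> HM K oK.
apply/eqP; rewrite eq_sym -subr_eq0; apply/eqP.
have E0 := @key C a b f g HM (-1) K 0 1 K (K + 2) 1 (ltac:(rewrite /oddZ; lia)) oK (ltac:(lia)) (ltac:(lia)) (ltac:(lia)).
move/eqP: E0; rewrite -subr_eq0 => /eqP E0.
have E1 := @key C a b f g HM (-1) K 0 2 K (K + 4) 3 (ltac:(rewrite /oddZ; lia)) oK (ltac:(lia)) (ltac:(lia)) (ltac:(lia)).
move/eqP: E1; rewrite -subr_eq0 => /eqP E1.
have E2 := @key C a b f g HM (-1) K 1 (-1) (K + 2) K (-3) (ltac:(rewrite /oddZ; lia)) oK (ltac:(lia)) (ltac:(lia)) (ltac:(lia)).
move/eqP: E2; rewrite -subr_eq0 => /eqP E2.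
have E3 := @key C a b f g HM (-1) K 1 1 (K + 2) (K + 4) 1 (ltac:(rewrite /oddZ; lia)) oK (ltac:(lia)) (ltac:(lia)) (ltac:(lia)).
move/eqP: E3; rewrite -subr_eq0 => /eqP E3.
have E4 := @key C a b f g HM (-1) K 2 (-1) (K + 4) (K + 2) (-3) (ltac:(rewrite /oddZ; lia)) oK (ltac:(lia)) (ltac:(lia)) (ltac:(lia)).
move/eqP: E4; rewrite -subr_eq0 => /eqP E4.
have E5 := @key C a b f g HM 1 K 0 (-1) K (K - 2) (-1) (ltac:(rewrite /oddZ; lia)) oK (ltac:(lia)) (ltac:(lia)) (ltac:(lia)).
move/eqP: E5; rewrite -subr_eq0 => /eqP E5.
have E6 := @key C a b f g HM 1 K 0 1 K (K + 2) 3 (ltac:(rewrite /oddZ; lia)) oK (ltac:(lia)) (ltac:(lia)) (ltac:(lia)).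
move/eqP: E6; rewrite -subr_eq0 => /eqP E6.
have E7 := @key C a b f g HM 3 K (-1) (-1) (K - 2) (K - 4) 1 (ltac:(rewrite /oddZ; lia)) oK (ltac:(lia)) (ltac:(lia)) (ltac:(lia)).
move/eqP: E7; rewrite -subr_eq0 => /eqP E7.
have E8 := @key C a b f g HM 3 K 0 (-2) K (K - 4) (-1) (ltac:(rewrite /oddZ; lia)) oK (ltac:(lia)) (ltac:(lia)) (ltac:(lia)).
move/eqP: E8; rewrite -subr_eq0 => /eqP E8.
have E9 := @key C a b f g HM 3 K 0 (-1) K (K - 2) 1 (ltac:(rewrite /oddZ; lia)) oK (ltac:(lia)) (ltac:(lia)) (ltac:(lia)).
move/eqP: E9; rewrite -subr_eq0 => /eqP E9.
have -> : f 1 K - f 1 (K + 2) =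
  ((- 1 * (a + Defs.half C K) ^+ 0 * (b + 1 / 2) ^+ 0) + ((31 / 2) * (a + Defs.half C K) ^+ 0 * (b + 1 / 2) ^+ 1) + (- (65 / 2) * (a + Defs.half C K) ^+ 0 * (b + 1 / 2) ^+ 2) + (16 * (a + Defs.half C K) ^+ 0 * (b + 1 / 2) ^+ 3) + (- (53 / 2) * (a + Defs.half C K) ^+ 1 * (b + 1 / 2) ^+ 0) + (75 * (a + Defs.half C K) ^+ 1 * (b + 1 / 2) ^+ 1) + (- 46 * (a + Defs.half C K) ^+ 1 * (b + 1 / 2) ^+ 2) + (- (49 / 2) * (a + Defs.half C K) ^+ 2 * (b + 1 / 2) ^+ 0) + (32 * (a + Defs.half C K) ^+ 2 * (b + 1 / 2) ^+ 1) + (- 2 * (a + Defs.half C K) ^+ 3 * (b + 1 / 2) ^+ 0)) * ((a + Defs.half C K + 0%:~R + (b + 1 / 2) * 1%:~R) * (f (-1) (K + 2) - f (-1) K) - (1%:~R / 2 - (-1)%:~R / 2) * (f 1 K - f (-1) K))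
  + ((- (91 / 6) * (a + Defs.half C K) ^+ 0 * (b + 1 / 2) ^+ 1) + (28 * (a + Defs.half C K) ^+ 0 * (b + 1 / 2) ^+ 2) + (- (77 / 6) * (a + Defs.half C K) ^+ 0 * (b + 1 / 2) ^+ 3) + ((21 / 2) * (a + Defs.half C K) ^+ 1 * (b + 1 / 2) ^+ 0) + (- 29 * (a + Defs.half C K) ^+ 1 * (b + 1 / 2) ^+ 1) + ((109 / 6) * (a + Defs.half C K) ^+ 1 * (b + 1 / 2) ^+ 2) + (5 * (a + Defs.half C K) ^+ 2 * (b + 1 / 2) ^+ 0) + (- (35 / 6) * (a + Defs.half C K) ^+ 2 * (b + 1 / 2) ^+ 1) + ((1 / 2) * (a + Defs.half C K) ^+ 3 * (b + 1 / 2) ^+ 0)) * ((a + Defs.half C K + 0%:~R + (b + 1 / 2) * 2%:~R) * (f (-1) (K + 4) - f (-1) K) - (2%:~R / 2 - (-1)%:~R / 2) * (f 3 K - f (-1) K))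
  + ((1 * (a + Defs.half C K) ^+ 0 * (b + 1 / 2) ^+ 0) + ((25 / 2) * (a + Defs.half C K) ^+ 0 * (b + 1 / 2) ^+ 1) + (- (155 / 6) * (a + Defs.half C K) ^+ 0 * (b + 1 / 2) ^+ 2) + ((29 / 3) * (a + Defs.half C K) ^+ 0 * (b + 1 / 2) ^+ 3) + ((21 / 2) * (a + Defs.half C K) ^+ 1 * (b + 1 / 2) ^+ 0) + (- (133 / 6) * (a + Defs.half C K) ^+ 1 * (b + 1 / 2) ^+ 1) + ((97 / 6) * (a + Defs.half C K) ^+ 1 * (b + 1 / 2) ^+ 2) + (- 18 * (a + Defs.half C K) ^+ 2 * (b + 1 / 2) ^+ 0) + ((71 / 3) * (a + Defs.half C K) ^+ 2 * (b + 1 / 2) ^+ 1) + (- (3 / 2) * (a + Defs.half C K) ^+ 3 * (b + 1 / 2) ^+ 0)) * ((a + Defs.half C K + 1%:~R + (b + 1 / 2) * (-1)%:~R) * (f (-1) K - f (-1) (K + 2)) - ((-1)%:~R / 2 - (-1)%:~R / 2) * (f (-3) (K + 2) - f (-1) (K + 2)))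
  + ((1 * (a + Defs.half C K) ^+ 0 * (b + 1 / 2) ^+ 0) + ((25 / 2) * (a + Defs.half C K) ^+ 0 * (b + 1 / 2) ^+ 1) + (- (47 / 2) * (a + Defs.half C K) ^+ 0 * (b + 1 / 2) ^+ 2) + (12 * (a + Defs.half C K) ^+ 0 * (b + 1 / 2) ^+ 3) + ((25 / 2) * (a + Defs.half C K) ^+ 1 * (b + 1 / 2) ^+ 0) + (- 15 * (a + Defs.half C K) ^+ 1 * (b + 1 / 2) ^+ 1) + ((17 / 2) * (a + Defs.half C K) ^+ 2 * (b + 1 / 2) ^+ 0) + (- 12 * (a + Defs.half C K) ^+ 2 * (b + 1 / 2) ^+ 1)) * ((a + Defs.half C K + 1%:~R + (b + 1 / 2) * 1%:~R) * (f (-1) (K + 4) - f (-1) (K + 2)) - (1%:~R / 2 - (-1)%:~R / 2) * (f 1 (K + 2) - f (-1) (K + 2)))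
  + (((1 / 2) * (a + Defs.half C K) ^+ 0 * (b + 1 / 2) ^+ 0) + (7 * (a + Defs.half C K) ^+ 0 * (b + 1 / 2) ^+ 1) + (- (103 / 6) * (a + Defs.half C K) ^+ 0 * (b + 1 / 2) ^+ 2) + ((41 / 3) * (a + Defs.half C K) ^+ 0 * (b + 1 / 2) ^+ 3) + ((13 / 2) * (a + Defs.half C K) ^+ 1 * (b + 1 / 2) ^+ 0) + ((23 / 3) * (a + Defs.half C K) ^+ 1 * (b + 1 / 2) ^+ 1) + (- (131 / 6) * (a + Defs.half C K) ^+ 1 * (b + 1 / 2) ^+ 2) + ((25 / 2) * (a + Defs.half C K) ^+ 2 * (b + 1 / 2) ^+ 0) + (- (49 / 3) * (a + Defs.half C K) ^+ 2 * (b + 1 / 2) ^+ 1) + ((1 / 2) * (a + Defs.half C K) ^+ 3 * (b + 1 / 2) ^+ 0)) * ((a + Defs.half C K + 2%:~R + (b + 1 / 2) * (-1)%:~R) * (f (-1) (K + 2) - f (-1) (K + 4)) - ((-1)%:~R / 2 - (-1)%:~R / 2) * (f (-3) (K + 4) - f (-1) (K + 4)))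
  + ((- 14 * (a + Defs.half C K) ^+ 0 * (b + 1 / 2) ^+ 1) + (14 * (a + Defs.half C K) ^+ 0 * (b + 1 / 2) ^+ 2) + (7 * (a + Defs.half C K) ^+ 1 * (b + 1 / 2) ^+ 0) + (- 9 * (a + Defs.half C K) ^+ 1 * (b + 1 / 2) ^+ 1) + (1 * (a + Defs.half C K) ^+ 2 * (b + 1 / 2) ^+ 0)) * ((a + Defs.half C K + 0%:~R + (b + 1 / 2) * (-1)%:~R) * (f 1 (K - 2) - f 1 K) - ((-1)%:~R / 2 - 1%:~R / 2) * (f (-1) K - f 1 K))
  + (((25 / 2) * (a + Defs.half C K) ^+ 0 * (b + 1 / 2) ^+ 0) + (- (47 / 2) * (a + Defs.half C K) ^+ 0 * (b + 1 / 2) ^+ 1) + (12 * (a + Defs.half C K) ^+ 0 * (b + 1 / 2) ^+ 2) + ((17 / 2) * (a + Defs.half C K) ^+ 1 * (b + 1 / 2) ^+ 0) + (- 12 * (a + Defs.half C K) ^+ 1 * (b + 1 / 2) ^+ 1)) * ((a + Defs.half C K + 0%:~R + (b + 1 / 2) * 1%:~R) * (f 1 (K + 2) - f 1 K) - (1%:~R / 2 - 1%:~R / 2) * (f 3 K - f 1 K))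
  + ((- 7 * (a + Defs.half C K) ^+ 0 * (b + 1 / 2) ^+ 2) + (7 * (a + Defs.half C K) ^+ 0 * (b + 1 / 2) ^+ 3) + ((21 / 2) * (a + Defs.half C K) ^+ 1 * (b + 1 / 2) ^+ 1) + (- (23 / 2) * (a + Defs.half C K) ^+ 1 * (b + 1 / 2) ^+ 2) + (- (7 / 2) * (a + Defs.half C K) ^+ 2 * (b + 1 / 2) ^+ 0) + (5 * (a + Defs.half C K) ^+ 2 * (b + 1 / 2) ^+ 1) + (- (1 / 2) * (a + Defs.half C K) ^+ 3 * (b + 1 / 2) ^+ 0)) * ((a + Defs.half C K + (-1)%:~R + (b + 1 / 2) * (-1)%:~R) * (f 3 (K - 4) - f 3 (K - 2)) - ((-1)%:~R / 2 - 3%:~R / 2) * (f 1 (K - 2) - f 3 (K - 2)))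
  + (((7 / 2) * (a + Defs.half C K) ^+ 0 * (b + 1 / 2) ^+ 1) + (- (7 / 2) * (a + Defs.half C K) ^+ 0 * (b + 1 / 2) ^+ 3) + (- (7 / 2) * (a + Defs.half C K) ^+ 1 * (b + 1 / 2) ^+ 0) + (- 3 * (a + Defs.half C K) ^+ 1 * (b + 1 / 2) ^+ 1) + ((15 / 2) * (a + Defs.half C K) ^+ 1 * (b + 1 / 2) ^+ 2) + (3 * (a + Defs.half C K) ^+ 2 * (b + 1 / 2) ^+ 0) + (- (9 / 2) * (a + Defs.half C K) ^+ 2 * (b + 1 / 2) ^+ 1) + ((1 / 2) * (a + Defs.half C K) ^+ 3 * (b + 1 / 2) ^+ 0)) * ((a + Defs.half C K + 0%:~R + (b + 1 / 2) * (-2)%:~R) * (f 3 (K - 4) - f 3 K) - ((-2)%:~R / 2 - 3%:~R / 2) * (f (-1) K - f 3 K))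
  + ((7 * (a + Defs.half C K) ^+ 0 * (b + 1 / 2) ^+ 1) + (- 14 * (a + Defs.half C K) ^+ 0 * (b + 1 / 2) ^+ 2) + (7 * (a + Defs.half C K) ^+ 0 * (b + 1 / 2) ^+ 3) + (- (7 / 2) * (a + Defs.half C K) ^+ 1 * (b + 1 / 2) ^+ 0) + (15 * (a + Defs.half C K) ^+ 1 * (b + 1 / 2) ^+ 1) + (- (23 / 2) * (a + Defs.half C K) ^+ 1 * (b + 1 / 2) ^+ 2) + (- 4 * (a + Defs.half C K) ^+ 2 * (b + 1 / 2) ^+ 0) + (5 * (a + Defs.half C K) ^+ 2 * (b + 1 / 2) ^+ 1) + (- (1 / 2) * (a + Defs.half C K) ^+ 3 * (b + 1 / 2) ^+ 0)) * ((a + Defs.half C K + 0%:~R + (b + 1 / 2) * (-1)%:~R) * (f 3 (K - 2) - f 3 K) - ((-1)%:~R / 2 - 3%:~R / 2) * (f 1 K - f 3 K))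
  by field.
by rewrite E0 E1 E2 E3 E4 E5 E6 E7 E8 E9 !mulr0 !addr0.
Qed.

Lemma oddZ_ex (z : int) : oddZ z -> exists y : int, z = 2 * y + 1.
Proof. rewrite /oddZ => h; exists ((z - 1) %/ 2)%Z; lia. Qed.

Lemma col1all (C : numClosedFieldType) (a b : C) (f g : int -> int -> C) :
  L_half_module a b f g -> forall K : int, oddZ K -> f 1 K = f 1 1.
Proof.
move=> HM K /oddZ_ex [y ->].
have oddn : forall z : int, oddZ (2 * z + 1) by move=> z; rewrite /oddZ; lia.
have pos : forall n : nat, f 1 (2 * n%:Z + 1) = f 1 1.
  elim=> [|n IH]; first by rewrite mulr0 add0r.
  have -> : 2 * n.+1%:Z + 1 = (2 * n%:Z + 1) + 2 by lia.
  by rewrite (@col1 _ _ _ _ _ HM) ?oddn.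
have neg : forall n : nat, f 1 (2 * (- n%:Z) + 1) = f 1 1.
  elim=> [|n IH]; first by rewrite oppr0 mulr0 add0r.
  rewrite -(@col1 _ _ _ _ _ HM); last by rewrite oddn.
  by have -> : 2 * - n.+1%:Z + 1 + 2 = 2 * (- n%:Z) + 1 by lia.
case: y => n; first exact: pos.
by have -> : 2 * Negz n + 1 = 2 * (- n.+1%:Z) + 1 by lia.
Qed.

Theorem lemma3p4 (C : numClosedFieldType) (a b : C)
    (f : int -> int -> C) (g : int -> int -> C) :
  L_half_module a b f g ->
  exists d0 : C, forall P K : int, oddZ P -> oddZ K -> f P K = d0.
Proof.
move=> HM; exists (f 1 1) => Q K oQ oK.
have h2 : (2 : C) != 0 by rewrite pnatr_eq0.
have gen : forall K' Q', oddZ K' -> oddZ Q' -> Q' != 3 -> f Q' K' = f 1 1.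
  move=> K' Q' oK' oQ' nQ.
  have [y ey] := oddZ_ex _ oQ'.
  have E := @key C a b f g HM 1 K' 0 y K' (K' + 2 * y) Q'
    (ltac:(rewrite /oddZ; lia)) oK' (ltac:(lia)) (ltac:(lia)) (ltac:(lia)).
  rewrite !(@col1all _ _ _ _ _ HM) ?subrr ?mulr0 in E; last 2 first.
  - done.
  - rewrite /oddZ in oK' *; lia.
  have hy : (y%:~R / 2 - 1%:~R / 2 : C) != 0.
    rewrite -mulrBl mulf_neq0 ?invr_eq0 // -intrB intr_eq0 subr_eq0.
    apply/eqP => y1; move/eqP: nQ; apply; lia.
  move/esym/eqP: E; rewrite mulf_eq0 (negbTE hy) /= subr_eq0 => /eqP ->.
  exact: (@col1all _ _ _ _ _ HM).
case: (eqVneq Q 3) => [-> | nQ]; last exact: gen.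
have E := @key C a b f g HM (-1) K 0 2 K (K + 4) 3
  (ltac:(rewrite /oddZ; lia)) oK (ltac:(lia)) (ltac:(lia)) (ltac:(lia)).
have g1 : f (-1) (K + 4) = f 1 1 by apply: gen => //; rewrite /oddZ in oK *; lia.
have g2 : f (-1) K = f 1 1 by apply: gen.
rewrite g1 g2 subrr mulr0 in E.
have hy : ((2 : int)%:~R / 2 - (-1 : int)%:~R / 2 : C) != 0.
  rewrite -mulrBl mulf_neq0 ?invr_eq0 // -intrB intr_eq0.
  by [].
move/esym/eqP: E; rewrite mulf_eq0 (negbTE hy) /= subr_eq0 => /eqP ->.
by apply: gen.
Qed.
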